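(* Let $k\ge2$, let $r=2^k$, and let $T_r$ be the $(k,r)$-tree, with $n=|T_r|$ nodes. Let $X$ be the atomic strongly-stable sequence with respect to $T_r$, whose length is $m=2^{rk}$. Then, as $k\to\infty$, $$\mathrm{cost}(OPT,X,T_r)=\Theta\Big(m\cdot\frac{\lg n}{\lg\lg\lg n}\Big).$$
   Context: $\lg$ is the base-2 logarithm. Binary search tree model. An algorithm $A$ serves a query sequence $X=[x_1,\dots,x_m]$ from an initial BST $T_0$. Before serving $x_t$ it holds a BST $T_{t-1}$; it searches $x_t$ from the root and may then restructure the tree by rotations into $T_t$. Let $P_t$ be the set of nodes on the root-to-$x_t$ path of $T_{t-1}$, and let $U_t$ be the node set of the minimal subtree containing all edges rotated in transforming $T_{t-1}$ into $T_t$. The cost at time $t$ is $|P_t\cup U_t|$, and $\mathrm{cost}(A,X,T_0)$ is the sum of these costs. $OPT$ denotes an algorithm of minimum cost on $(X,T_0)$ that knows all of $X$ in advance. $(k,r)$-trees. Let $k\ge2$ and $r\ge0$ be integers. $T_0$ is a single node. For $r\ge1$, $T_r$ has $k$ trunk nodes $w_1,\dots,w_k$: $w_1$ is the root, $w_2$ is the right child of $w_1$, and $w_{j+1}$ is the left child of $w_j$ for $2\le j\le k-1$. The left child of $w_k$ is a single leaf (the actual leaf). Each of the remaining $k$ child positions of trunk nodes (the left child of $w_1$ and the right child of $w_j$ for $2\le j\le k$) is the root of a copy of $T_{r-1}$. Keys are $1,\dots,|T_r|$ in symmetric order. Stable sequences. Let $T$ be a full binary search tree, and let $X$ be a query sequence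 consisting only of keys stored at leaves of $T$. For an inner node $v$, let $X_v$ be the subsequence of $X$ consisting of the queries to keys in the subtree of $v$. The node $v$ is strongly-stable if consecutive queries of $X_v$ alternate between the left and right subtrees of $v$. $X$ is strongly-stable if every inner node of $T$ is strongly-stable. The atomic sequence is the shortest such sequence all of whose repetitions are again strongly-stable for $T$. *)

(* Defs.v *)
From Stdlib Require Import Reals.
From mathcomp Require Import all_boot.

Set Implicit Arguments.
Unset Strict Implicit.
Unset Printing Implicit Defensive.

(* Binary search trees with nat keys.  [Nil] is the empty tree (an     *)
(* absent child); a leaf node is [Node Nil x Nil].                     *)
Inductive bst := Nil | Node of bst & nat & bst.

Fixpoint keys (t : bst) : seq nat :=
  if t is Node l x r then keys l ++ x :: keys r else [::].

Fixpoint bst_size (t : bst) : nat :=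
  if t is Node l _ r then bst_size l + 1 + bst_size r else 0.

Fixpoint leaf_keys (t : bst) : seq nat :=
  match t with
  | Nil => [::]
  | Node Nil x Nil => [:: x]
  | Node l _ r => leaf_keys l ++ leaf_keys r
  end.

Fixpoint subtrees (t : bst) : seq bst :=
  if t is Node l x r then t :: subtrees l ++ subtrees r else [::].

Fixpoint subtree_at (y : nat) (t : bst) : bst :=
  match t with
  | Nil => Nil
  | Node l x r =>
      if y == x then t else if y < x then subtree_at y l else subtree_at y r
  end.

Fixpoint path_keys (t : bst) (x : nat) : seq nat :=
  match t with
  | Nil => [::]
  | Node l y r =>
      y :: (if x == y then [::] else if x < y then path_keys l x else path_keys r x)
  end.

Fixpoint parent_of (y : nat) (t : bst) : option nat :=
  match t with
  | Nil => None
  | Node l x r =>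
      if y == x then None
      else
        let c := if y < x then l else r in
        match c with
        | Node _ z _ => if y == z then Some x else parent_of y c
        | Nil => None
        end
  end.

(* rotate the node with key a up over its parent (rotating the edge
   between them); None if a is the root or absent *)
Fixpoint rot_up (a : nat) (t : bst) : option bst :=
  match t with
  | Nil => None
  | Node l x r =>
      if a == x then None
      else if a < x then
        match l with
        | Node ll y lr =>
            if a == y then Some (Node ll y (Node lr x r))
            else omap (fun l' => Node l' x r) (rot_up a l)
        | Nil => None
        end
      else
        match r with
        | Node rl y rr =>
            if a == y then Some (Node (Node l x rl) y rr)
            else omap (fun r' => Node l x r') (rot_up a r)
        | Nil => None
        end
  end.

(* apply a sequence of rotations; returns the final tree together with
   the list of endpoints of all rotated edges *)
Fixpoint run_rots (rs : seq nat) (t : bst) : option (bst * seq nat) :=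
  match rs with
  | [::] => Some (t, [::])
  | a :: rs' =>
      match rot_up a t, parent_of a t with
      | Some t', Some p =>
          omap (fun tS => (tS.1, a :: p :: tS.2)) (run_rots rs' t')
      | _, _ => None
      end
  end.

(* membership of node y in the minimal (connected) subtree of t containing
   the node set S: the subtree of y meets S, and neither child subtree of y
   contains all of S (i.e. y lies on a path between a node of S and the
   lowest common ancestor of S). *)
Definition in_span (t : bst) (S : seq nat) (y : nat) : bool :=
  match subtree_at y t with
  | Nil => false
  | Node l _ r =>
      [&& has (fun s => s \in keys (subtree_at y t)) S,
          ~~ all (fun s => s \in keys l) S & ~~ all (fun s => s \in keys r) S]
  end.

(* cost of one step: |P_t ∪ U_t|, P_t the search path of x in t, U_t the
   node set of the minimal subtree of t containing all rotated edges *)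
Definition step_cost (t : bst) (x : nat) (S : seq nat) : nat :=
  size [seq y <- keys t | (y \in path_keys t x) || in_span t S y].

(* total cost of serving X from t with the rotation schedule R
   (R's i-th entry is the list of rotations performed after the i-th search) *)
Fixpoint serve (t : bst) (X : seq nat) (R : seq (seq nat)) : option nat :=
  match X, R with
  | [::], [::] => Some 0
  | x :: X', rs :: R' =>
      match run_rots rs t with
      | Some (t', E) => omap (addn (step_cost t x E)) (serve t' X' R')
      | None => None
      end
  | _, _ => None
  end.

Definition opt_cost (T0 : bst) (X : seq nat) (c : nat) : Prop :=
  (exists R, serve T0 X R = Some c) /\
  (forall R c', serve T0 X R = Some c' -> c <= c').

Definition leafnode : bst := Node Nil 0 Nil.

(* chain j S : trunk nodes w_{k-j+1},...,w_k; each has right child S, the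
   top-down left spine ends in the actual leaf *)
Fixpoint chain (j : nat) (Sub : bst) : bst :=
  if j is j'.+1 then Node (chain j' Sub) 0 Sub else leafnode.

Fixpoint kr_shape (k r : nat) : bst :=
  if r is r'.+1 then
    let Sub := kr_shape k r' in Node Sub 0 (chain k.-1 Sub)
  else leafnode.

Fixpoint number (t : bst) (o : nat) : bst :=
  match t with
  | Nil => Nil
  | Node l _ r =>
      let x := o + bst_size l + 1 in Node (number l o) x (number r x)
  end.

Definition kr_tree (k r : nat) : bst := number (kr_shape k r) 0.

Definition node_strongly_stable (v : bst) (X : seq nat) : bool :=
  match v with
  | Nil => true
  | Node l _ r =>
      let Xv := [seq x <- X | x \in keys v] in
      sorted (fun a b => (a \in keys l) != (b \in keys l)) Xv
  end.

Definition is_inner (v : bst) : bool :=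
  match v with
  | Node Nil _ Nil => false
  | Node _ _ _ => true
  | Nil => false
  end.

Definition strongly_stable (T : bst) (X : seq nat) : bool :=
  all (fun x => x \in leaf_keys T) X &&
  all (fun v => is_inner v ==> node_strongly_stable v X) (subtrees T).

Definition repetitions_stable (T : bst) (X : seq nat) : Prop :=
  forall j, 0 < j -> strongly_stable T (flatten (nseq j X)).

Definition atomic (T : bst) (X : seq nat) : Prop :=
  X != [::] /\ repetitions_stable T X /\
  (forall Y, Y != [::] -> repetitions_stable T Y -> size X <= size Y).

Definition lg (x : R) : R := Rdiv (ln x) (ln (IZR 2)).

(* Main.v *)
Require Import Defs.
From Stdlib Require Import Reals Lra Classical.
From mathcomp Require Import all_boot zify.
From HB Require Import structures.
Notation Nil := Defs.Nil.
Notation number := Defs.number.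

Set Implicit Arguments.
Unset Strict Implicit.
Unset Printing Implicit Defensive.


Fixpoint hn (t : bst) (lb ub : nat) : option nat :=
  match t with
  | Nil => None
  | Node l x r => if (lb <= x) && (x <= ub) then Some x
                  else if x < lb then hn r lb ub else hn l lb ub
  end.

Lemma hn_in t lb ub z : hn t lb ub = Some z -> lb <= z <= ub.
Proof.
elim: t => //= l IHl x r IHr.
case: ifP => [H [<-] //|_]; case: ifP => _; [exact: IHr|exact: IHl].
Qed.

Lemma hn_keys t lb ub z : hn t lb ub = Some z -> z \in keys t.
Proof.
elim: t => //= l IHl x r IHr.
rewrite mem_cat in_cons.
case: ifP => [H [->]|_]; first by rewrite eqxx orbT.
case: ifP => _ H; [by rewrite (IHr H) !orbT | by rewrite (IHl H)].
Qed.

Lemma hn_sub t lb ub lb' ub' z : hn t lb ub = Some z -> lb <= lb' -> ub' <= ub ->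
  lb' <= z <= ub' -> hn t lb' ub' = Some z.
Proof.
move=> + H1 H2 H3; elim: t => //= l IHl x r IHr.
case: ifP => [H [Hx]|Hn].
  by subst x; rewrite H3.
case: ifP => Hlt H.
  have -> : (lb' <= x) && (x <= ub') = false by lia.
  have -> : x < lb' by lia.
  exact: IHr.
have -> : (lb' <= x) && (x <= ub') = false.
  have := hn_in H; lia.
have -> : x < lb' = false by have := hn_in H; lia.
exact: IHl.
Qed.

Lemma hn_path t lb ub z x : hn t lb ub = Some z -> lb <= x <= ub -> z \in path_keys t x.
Proof.
move=> + Hx; elim: t => //= l IHl y r IHr.
case: ifP => [H [->]|Hn]; first by rewrite in_cons eqxx.
case: ifP => Hlt H; rewrite in_cons; apply/orP; right.
  have -> : (x == y) = false by lia.
  have -> : x < y = false by lia.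
  exact: IHr.
have -> : (x == y) = false by lia.
have -> : x < y by lia.
exact: IHl.
Qed.

Lemma sorted_node (l r : bst) x :
  sorted ltn (keys (Node l x r)) ->
  [/\ sorted ltn (keys l), sorted ltn (keys r),
      (forall a, a \in keys l -> a < x) & (forall b, b \in keys r -> x < b)].
Proof.
rewrite /= sorted_cat_cons => /andP [H1 H2].
have Hl : sorted ltn (keys l) by move: H1; rewrite -cats1 => /cat_sorted2 [].
have Hr : sorted ltn (keys r) by exact: path_sorted H2.
split => //.
  move=> a Ha.
  move: H1; rewrite (sorted_pairwise ltn_trans) -cats1 pairwise_cat => /and3P [H _ _].
  by move/allrelP: H => /(_ a x Ha); rewrite mem_seq1 eqxx => /(_ isT).
move=> b Hb.
move: H2; rewrite (path_sortedE ltn_trans) => /andP [/allP H _].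
exact: H.
Qed.

Lemma hn_exists t lb ub x : sorted ltn (keys t) -> x \in keys t -> lb <= x <= ub ->
  exists z, hn t lb ub = Some z.
Proof.
move=> + + Hx; elim: t => //= l IHl y r IHr Hs.
have [Hl Hr Hal Har] := sorted_node Hs.
rewrite mem_cat in_cons => Hk.
case: ifP => [_|Hn]; first by eauto.
case: ifP => Hlt.
  apply: IHr => //.
  case/or3P: Hk => [/Hal|/eqP|] //; lia.
apply: IHl => //.
case/or3P: Hk => [|/eqP|/Har] //; lia.
Qed.

Definition inap (a p : nat) (o : option nat) :=
  if o is Some u then (u == a) || (u == p) else false.

Lemma rot_hn a t t' : rot_up a t = Some t' -> exists p, parent_of a t = Some p /\
  keys t' = keys t /\
  forall lb ub, hn t' lb ub = hn t lb ub \/ (inap a p (hn t lb ub) /\ inap a p (hn t' lb ub)).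
Proof.
elim: t t' => //= l IHl x r IHr t'.
case: (eqVneq a x) => // Hax.
case: ifP => Hlt.
  case: l IHl => // ll y lr IHl.
  case: (eqVneq a y) => Hay.
    move=> [<-]; subst y; exists x; split => //; split.
      by rewrite /= -catA.
    move=> lb ub /=.
    do ! case: ifP => /=; rewrite ?eqxx ?orbT; move=> *; try (by left); try (by right); lia.
  case Hr: (rot_up a (Node ll y lr)) => [l0|] //= [<-].
  have [p [Hp [Hk Hh]]] := IHl _ Hr.
  exists p; split; first by simpl; exact: Hp.
  split; first by rewrite /= Hk.
  move=> lb ub /=; case: ifP => _; first by left.
  case: ifP => _; [by left|exact: Hh].
case: r IHr => // rl y rr IHr.
case: (eqVneq a y) => Hay.
  move=> [<-]; subst y; exists x; split => //; split.
    by rewrite /= -catA.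
  move=> lb ub /=.
  do ! case: ifP => /=; rewrite ?eqxx ?orbT; move=> *; try (by left); try (by right); lia.
case Hr: (rot_up a (Node rl y rr)) => [r0|] //= [<-].
have [p [Hp [Hk Hh]]] := IHr _ Hr.
exists p; split; first by simpl; exact: Hp.
split; first by rewrite /= Hk.
move=> lb ub /=; case: ifP => _; first by left.
case: ifP => _; [exact: Hh|by left].
Qed.


Definition tp (lb y ub : nat) (t : bst) : option nat :=
  match hn t lb ub with
  | Some j => if j < y then hn t y ub else hn t lb y.-1
  | None => None
  end.

Lemma tp_in lb y ub t z : tp lb y ub t = Some z -> lb <= z <= ub.
Proof.
rewrite /tp; case E: (hn t lb ub) => [j|] //; have := hn_in E.
case: ifP => Hjy H1 /hn_in; lia.
Qed.

Lemma tp_keys lb y ub t z : tp lb y ub t = Some z -> z \in keys t.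
Proof.
rewrite /tp; case: (hn t lb ub) => [j|] //; case: ifP => _; exact: hn_keys.
Qed.

Lemma tp_lt lb y ub t z : 0 < y -> tp lb y ub t = Some z -> z < y -> hn t lb y.-1 = Some z.
Proof.
rewrite /tp => Hy; case: (hn t lb ub) => [j|] //; case: ifP => _ // /hn_in; lia.
Qed.

Lemma tp_ge lb y ub t z : 0 < y -> tp lb y ub t = Some z -> y <= z -> hn t y ub = Some z.
Proof.
rewrite /tp => Hy; case: (hn t lb ub) => [j|] //; case: ifP => _ // /hn_in; lia.
Qed.

Lemma tp_neJ lb y ub t z : 0 < y -> tp lb y ub t = Some z -> hn t lb ub <> Some z.
Proof.
rewrite /tp => Hy; case: (hn t lb ub) => [j|] //; case: ifP => Hj /hn_in H [E]; lia.
Qed.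

Lemma tp_some lb y ub t K a b : keys t = K -> sorted ltn K -> a \in K -> lb <= a < y ->
  b \in K -> y <= b <= ub -> exists z, tp lb y ub t = Some z.
Proof.
move=> Hk Hs Ha Ha' Hb Hb'; rewrite -Hk in Hs Ha Hb.
have [j Ej] := hn_exists (lb:=lb) (ub:=ub) Hs Ha ltac:(lia).
rewrite /tp Ej; case: ifP => _.
  exact: hn_exists Hs Hb Hb'.
apply: hn_exists Hs Ha _; lia.
Qed.

Lemma tp_rot lb y ub t t' a p z : lb < y -> y <= ub ->
  (forall lb ub, hn t' lb ub = hn t lb ub \/ (inap a p (hn t lb ub) /\ inap a p (hn t' lb ub))) ->
  tp lb y ub t = Some z -> (z != a) && (z != p) -> tp lb y ub t' = Some z.
Proof.
move=> Hly Hyu Hh Ht Hz.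
have Hy : 0 < y by lia.
have Hzi := tp_in Ht.
case: (ltnP z y) => Hzy.
  have E := tp_lt Hy Ht Hzy.
  have E' : hn t' lb y.-1 = Some z.
    case: (Hh lb y.-1) => [->//|[]]; rewrite E /=; lia.
  move: Ht; rewrite /tp.
  case EJ: (hn t lb ub) => [j|] //.
  case: (Hh lb ub) => [->|[]]; rewrite ?EJ //.
    by case: ifP => _; rewrite ?E' // => /hn_in; lia.
  case EJ': (hn t' lb ub) => [v|] //= _ Hv.
  case: ifP => Hj; first by move=> /hn_in; lia.
  move=> _; case: ifP => Hvy //.
  have := hn_sub EJ' (lb':=lb) (ub':=y.-1) (leqnn _) ltac:(lia) ltac:(have := hn_in EJ'; lia).
  rewrite E' => -[Evz]; lia.
have E := tp_ge Hy Ht Hzy.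
have E' : hn t' y ub = Some z.
  case: (Hh y ub) => [->//|[]]; rewrite E /=; lia.
move: Ht; rewrite /tp.
case EJ: (hn t lb ub) => [j|] //.
case: (Hh lb ub) => [->|[]]; rewrite ?EJ //.
  by case: ifP => _; rewrite ?E' // => /hn_in; lia.
case EJ': (hn t' lb ub) => [v|] //= _ Hv.
case: ifP => Hj; last by move=> /hn_in; lia.
move=> _; case: ifP => Hvy //.
have := hn_sub EJ' (lb':=y) (ub':=ub) ltac:(lia) (leqnn _) ltac:(have := hn_in EJ'; lia).
rewrite E' => -[Evz]; lia.
Qed.

Lemma run_keys rs t t' E : run_rots rs t = Some (t', E) -> keys t' = keys t.
Proof.
elim: rs t t' E => [|a rs IH] t t' E /=; first by case=> ->.
case Hr: (rot_up a t) => [t1|] //; case Hp: (parent_of a t) => [p|] //.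
case Hrr: (run_rots rs t1) => [[t2 E2]|] //= [<- _].
have [p0 [_ [Hk _]]] := rot_hn Hr.
by rewrite (IH _ _ _ Hrr) Hk.
Qed.

Lemma run_tp lb y ub rs t t' E z : run_rots rs t = Some (t', E) -> lb < y <= ub ->
  tp lb y ub t = Some z -> z \notin E -> tp lb y ub t' = Some z.
Proof.
move=> + Hv; elim: rs t t' E => [|a rs IH] t t' E /=; first by case=> -> _ ->.
case Hr: (rot_up a t) => [t1|] //; case Hp: (parent_of a t) => [p|] //.
case Hrr: (run_rots rs t1) => [[t2 E2]|] //= [<- <-] Ht.
rewrite !in_cons !negb_or => /and3P [Ha Hpp HE].
have [p0 [Hp0 [Hk Hh]]] := rot_hn Hr.
rewrite Hp in Hp0; case: Hp0 => ?; subst p0.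
apply: (IH _ _ _ Hrr _ HE).
apply: (tp_rot (t:=t) (a:=a) (p:=p)) => //; try lia.
Qed.

Lemma subtree_atP t z : sorted ltn (keys t) -> z \in keys t ->
  exists l r, subtree_at z t = Node l z r /\ z \notin keys l /\ z \notin keys r.
Proof.
elim: t => //= l IHl x r IHr Hs.
have [Hl Hr Hal Har] := sorted_node Hs.
rewrite mem_cat in_cons => Hk.
case: (eqVneq z x) => [->|Hzx].
  exists l, r; split => //; split; apply/negP.
    by move/Hal; rewrite ltnn.
  by move/Har; rewrite ltnn.
case: ifP => Hlt.
  apply: IHl => //; case/or3P: Hk => // [/eqP|/Har]; lia.
apply: IHr => //; case/or3P: Hk => // [/Hal|/eqP]; lia.
Qed.

Lemma in_span_E t E z : sorted ltn (keys t) -> z \in keys t -> z \in E -> in_span t E z.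
Proof.
move=> Hs Hk HE; rewrite /in_span.
have [l [r [-> [H1 H2]]]] := subtree_atP Hs Hk.
apply/and3P; split.
- by apply/hasP; exists z => //=; rewrite mem_cat in_cons eqxx orbT.
- by apply/negP => /allP /(_ z HE); rewrite (negbTE H1).
- by apply/negP => /allP /(_ z HE); rewrite (negbTE H2).
Qed.

Definition touched t x E z := (z \in path_keys t x) || in_span t E z.

Definition ev lb y ub t x E : bool :=
  if tp lb y ub t is Some z then touched t x E z else false.

Fixpoint evs (lb y ub : nat) (t : bst) (X : seq nat) (R : seq (seq nat)) : nat :=
  match X, R with
  | x :: X', rs :: R' =>
      match run_rots rs t with
      | Some (t', E) => ev lb y ub t x E + evs lb y ub t' X' R'
      | None => 0
      end
  | _, _ => 0
  end.

Definition inJ lb ub x := (lb <= x) && (x <= ub).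

Fixpoint altc (lb y ub : nat) (s : option bool) (X : seq nat) : nat :=
  match X with
  | [::] => 0
  | x :: X' =>
      if inJ lb ub x then
        (if s is Some b then b != (x < y) else false) + altc lb y ub (Some (x < y)) X'
      else altc lb y ub s X'
  end.

Lemma alt_le lb y ub K a b : sorted ltn K -> lb < y <= ub ->
  a \in K -> lb <= a < y -> b \in K -> y <= b <= ub ->
  forall X t R c, serve t X R = Some c -> keys t = K ->
  forall s (f : bool), (f -> exists z, tp lb y ub t = Some z /\
                              forall bb, s = Some bb -> bb != (z < y)) ->
  altc lb y ub s X <= 2 * evs lb y ub t X R + ~~ f.
Proof.
move=> HK Hv Ha Ha' Hb Hb'.
elim=> [|x X IH] t [|rs R] c //=.
case Hrr: (run_rots rs t) => [[t' E]|] //.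
case Hs: (serve t' X R) => [c'|] //= _ Hk s f Hf.
have Hk' : keys t' = K by rewrite (run_keys Hrr).
have [z Hz] := tp_some (t:=t) Hk HK Ha Ha' Hb Hb'.
have Hst : sorted ltn (keys t) by rewrite Hk.
rewrite /ev Hz.
case Ht: (touched t x E z).
  case: ifP => Hx.
    have := IH t' R c' Hs Hk' (Some (x < y)) false (fun H => ltac:(done)).
    case: s Hf => [bb|] _ /=; [case: (bb != _)|]; lia.
  have := IH t' R c' Hs Hk' s false (fun H => ltac:(done)); lia.
have HzE : z \notin E.
  apply/negP => HE; move: Ht; rewrite /touched in_span_E ?orbT //.
  by rewrite -Hk in HK; exact: (tp_keys Hz).
have Hz' := run_tp Hrr Hv Hz HzE.
have Hnp : z \notin path_keys t x by move: Ht; rewrite /touched; case: (z \in _).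
rewrite add0n.
case: ifP => Hx.
  have Hside : (z < y) != (x < y).
    apply/negP => /eqP Hzx; move/negP: Hnp; apply.
    have Hzi := tp_in Hz.
    case: (ltnP z y) Hzx => Hzy Hzx.
      apply: (hn_path (tp_lt _ Hz Hzy)); first lia.
      move: Hx; rewrite /inJ; lia.
    apply: (hn_path (tp_ge _ Hz Hzy)); first lia.
    move: Hx; rewrite /inJ; lia.
  have := IH t' R c' Hs Hk' (Some (x < y)) true.
  have Hinv : true -> exists z0, tp lb y ub t' = Some z0 /\
       forall bb, Some (x < y) = Some bb -> bb != (z0 < y).
    move=> _; exists z; split => // bb [<-]; by rewrite eq_sym.
  move=> /(_ Hinv) HI.
  case: s Hf => [bb|] Hf /=; last by lia.
  case: (eqVneq bb (x < y)) => Hbb /=; first by lia.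
  case: f Hf => Hf /=; last by lia.
  have [z0 [Hz0 Hb0]] := Hf isT.
  rewrite Hz in Hz0; case: Hz0 => ?; subst z0.
  have H0 := Hb0 bb erefl; clear -Hside Hbb H0; move: H0 Hside Hbb.
  by case: (z < y); case: (x < y); case: bb.
have := IH t' R c' Hs Hk' s f.
apply => Hf'; have [z0 [Hz0 Hb0]] := Hf Hf'.
by rewrite Hz in Hz0; case: Hz0 => ?; subst z0; exists z.
Qed.

Definition rtp (rho : nat * nat * nat) t := tp rho.1.1 rho.1.2 rho.2 t.
Definition validr (rho : nat * nat * nat) := (rho.1.1 < rho.1.2) && (rho.1.2 <= rho.2).
Definition compat (r1 r2 : nat * nat * nat) : bool :=
  let: (l1, y1, u1) := r1 in let: (l2, y2, u2) := r2 in
  [|| u1 < l2, u2 < l1, [&& l1 <= l2, u2 <= u1 & (u2 < y1) || (y1 <= l2)] |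
      [&& l2 <= l1, u1 <= u2 & (u1 < y2) || (y2 <= l1)]].

Lemma compat_inj r1 r2 t z : compat r1 r2 -> validr r1 -> validr r2 ->
  rtp r1 t = Some z -> rtp r2 t = Some z -> False.
Proof.
case: r1 => [[l1 y1] u1]; case: r2 => [[l2 y2] u2]; rewrite /rtp /validr /= => Hc /andP [Hv1 Hv1'] /andP [Hv2 Hv2'] H1 H2.
have Hz1 := tp_in H1; have Hz2 := tp_in H2.
case/or4P: Hc => [Hc|Hc|/and3P [Ha Hb /orP [Hc|Hc]]|/and3P [Ha Hb /orP [Hc|Hc]]]; try lia.
- have E : hn t l1 y1.-1 = Some z by apply: (tp_lt _ H1); lia.
  have : hn t l2 u2 = Some z by apply: (hn_sub E); lia.
  by apply: tp_neJ H2; lia.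
- have E : hn t y1 u1 = Some z by apply: (tp_ge _ H1); lia.
  have : hn t l2 u2 = Some z by apply: (hn_sub E); lia.
  by apply: tp_neJ H2; lia.
- have E : hn t l2 y2.-1 = Some z by apply: (tp_lt _ H2); lia.
  have : hn t l1 u1 = Some z by apply: (hn_sub E); lia.
  by apply: tp_neJ H1; lia.
- have E : hn t y2 u2 = Some z by apply: (tp_ge _ H2); lia.
  have : hn t l1 u1 = Some z by apply: (hn_sub E); lia.
  by apply: tp_neJ H1; lia.
Qed.

Lemma uniq_tp s t : pairwise compat s -> all validr s -> uniq (pmap (rtp^~ t) s).
Proof.
elim: s => //= r s IH /andP [Hr Hp] /andP [Hv Hva].
case E: (rtp r t) => [z|] /=; last exact: IH.
rewrite IH // andbT mem_pmap; apply/negP => /mapP [r2 Hr2 E2].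
apply: (compat_inj (t:=t) (z:=z) (allP Hr r2 Hr2)) => //; first exact: (allP Hva).
Qed.

Definition evr (rho : nat * nat * nat) t x E := ev rho.1.1 rho.1.2 rho.2 t x E.

Lemma sum_ev s t x E : pairwise compat s -> all validr s ->
  \sum_(r <- s) (evr r t x E : nat) <= count (touched t x E) (keys t).
Proof.
move=> Hp Hv.
have -> : \sum_(r <- s) (evr r t x E : nat) = count (touched t x E) (pmap (rtp^~ t) s).
  elim: (s) => [|r s' IH]; first by rewrite big_nil.
  rewrite big_cons IH /evr /ev /=; rewrite /rtp.
  by case: (tp _ _ _ t) => [z|] //=.
rewrite -!size_filter; apply: uniq_leq_size; first exact/filter_uniq/uniq_tp.
move=> z; rewrite !mem_filter => /andP [-> Hz] /=.
move: Hz; rewrite mem_pmap => /mapP [r _ E2].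
exact: (tp_keys (esym E2)).
Qed.

Definition evsr (rho : nat * nat * nat) t X R := evs rho.1.1 rho.1.2 rho.2 t X R.

Lemma sum_evs s : pairwise compat s -> all validr s ->
  forall X t R c, serve t X R = Some c -> \sum_(r <- s) evsr r t X R <= c.
Proof.
move=> Hp Hv; elim=> [|x X IH] t [|rs R] c //=.
  by move=> _; rewrite big1 //; case=> [[]].
case Hrr: (run_rots rs t) => [[t' E]|] //.
case Hs: (serve t' X R) => [c'|] //= [<-].
have -> : \sum_(r <- s) evsr r t (x :: X) (rs :: R) =
          \sum_(r <- s) evr r t x E + \sum_(r <- s) evsr r t' X R.
  rewrite -big_split /=; apply: eq_bigr => r _; by rewrite /evsr /= Hrr.
apply: leq_add; last exact: IH Hs.
rewrite /step_cost size_filter; exact: sum_ev.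
Qed.

Definition bst_eq_dec : forall x y : bst, {x=y}+{x<>y}.
Proof. decide equality; exact: PeanoNat.Nat.eq_dec. Defined.
HB.instance Definition _ := hasDecEq.Build bst (compareP bst_eq_dec).


Lemma size_number s o : bst_size (number s o) = bst_size s.
Proof. by elim: s o => //= l IHl x r IHr o; rewrite IHl IHr. Qed.

Lemma keys_number s o : keys (number s o) = iota o.+1 (bst_size s).
Proof.
elim: s o => //= l IHl x r IHr o.
rewrite IHl IHr !iotaD -catA /=; congr (_ ++ _).
f_equal; [lia|f_equal; lia].
Qed.

Lemma subtrees_number s o v : v \in subtrees (number s o) -> exists s' o', v = number s' o'.
Proof.
elim: s o => //= l IHl x r IHr o; rewrite in_cons mem_cat => /or3P [/eqP ->||].
- by exists (Node l x r), o.
- exact: IHl.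
- exact: IHr.
Qed.

Definition rho (v : bst) : nat * nat * nat :=
  if v is Node l y r then (y - bst_size l, y, y + bst_size r) else (0, 0, 0).

Lemma rho_bounds s o v : v \in subtrees (number s o) ->
  [/\ o < (rho v).1.1, (rho v).2 <= o + bst_size s & (rho v).1.1 <= (rho v).1.2 <= (rho v).2].
Proof.
elim: s o => //= l IHl x r IHr o; rewrite in_cons mem_cat => /or3P [/eqP ->|H|H] /=.
- rewrite ?size_number; split; lia.
- have [H1 H2 H3] := IHl _ H; split => //; lia.
- have [H1 H2 H3] := IHr _ H; split => //; lia.
Qed.

Lemma compat_number s o : pairwise compat [seq rho v | v <- subtrees (number s o)].
Proof.
elim: s o => //= l IHl x r IHr o.
rewrite map_cat pairwise_cat IHl IHr !andbT size_number.
apply/andP; split.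
  rewrite all_cat; apply/andP; split; apply/allP => rr /mapP [v Hv ->].
    have [H1 H2 H3] := rho_bounds Hv.
    move: H1 H2 H3; case: (rho v) => [[a b] c] /=; rewrite /compat /= ?size_number; lia.
  have [H1 H2 H3] := rho_bounds Hv.
  move: H1 H2 H3; case: (rho v) => [[a b] c] /=; rewrite /compat /= ?size_number; lia.
apply/allrelP => r1 r2 /mapP [v1 Hv1 ->] /mapP [v2 Hv2 ->].
have [H1 H2 H3] := rho_bounds Hv1.
have [H1' H2' H3'] := rho_bounds Hv2.
move: H1 H2 H3 H1' H2' H3';
  case: (rho v1) => [[a b] c]; case: (rho v2) => [[a' b'] c'] /=; rewrite /compat /= ?size_number; lia.
Qed.

Definition refs (T : bst) := [seq rho v | v <- subtrees T & is_inner v].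

Lemma refs_compat s : pairwise compat (refs (number s 0)).
Proof.
rewrite /refs pairwise_map; apply: pairwise_filter; rewrite -pairwise_map.
exact: compat_number.
Qed.

Definition isNil (t : bst) := if t is Node _ _ _ then false else true.

Fixpoint fullb (t : bst) : bool :=
  match t with
  | Nil => false
  | Node l _ r => if isNil l && isNil r then true else fullb l && fullb r
  end.

Lemma fullb_number s o : fullb (number s o) = fullb s.
Proof.
elim: s o => //= l IHl x r IHr o; rewrite IHl IHr.
by case: l {IHl} => [|? ? ?]; case: r {IHr}.
Qed.

Lemma fullb_sub t v : fullb t -> v \in subtrees t -> fullb v.
Proof.
elim: t => //= l IHl x r IHr.
rewrite in_cons mem_cat => Hf /or3P [/eqP ->|H|H] //.
  case: l IHl Hf H => [|ll lx lr] IHl Hf H //; apply: IHl H.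
  by move: Hf => /= /andP [].
case: r IHr Hf H => [|rl rx rr] IHr Hf H //; apply: IHr H.
by move: Hf => /=; rewrite andbF => /andP [].
Qed.

Lemma inner_full l y r : fullb (Node l y r) -> is_inner (Node l y r) ->
  0 < bst_size l /\ 0 < bst_size r.
Proof.
case: l => [|ll lx lr]; case: r => [|rl rx rr] //= Hf _; move: Hf; rewrite ?andbF //= => _; split; lia.
Qed.

Lemma is_inner_number s o : is_inner (number s o) = is_inner s.
Proof. by case: s => [|[|? ? ?] x [|? ? ?]]. Qed.

Lemma refs_valid s : fullb s -> all validr (refs (number s 0)).
Proof.
move=> Hf; apply/allP => rr /mapP [v]; rewrite mem_filter => /andP [Hi Hv] ->.
have Hfv : fullb v by apply: (fullb_sub _ Hv); rewrite fullb_number.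
have [s' [o' E]] := subtrees_number Hv; subst v; clear Hv.
rewrite fullb_number in Hfv; rewrite is_inner_number in Hi.
case: s' Hi Hfv => [|l x r] // Hi Hfv.
have [H1 H2] := inner_full Hfv Hi.
rewrite /validr /= ?size_number; lia.
Qed.


Lemma alt_path (T : Type) (P : pred T) x s : path (fun a b => P a != P b) x s ->
  if P (last x s) == P x then
    (if P x then count P (x :: s) = (count (predC P) (x :: s)).+1
     else count (predC P) (x :: s) = (count P (x :: s)).+1)
  else count P (x :: s) = count (predC P) (x :: s).
Proof.
elim: s x => [|y s IH] x /=; first by case: (P x).
move=> /andP [Hxy Hp]; have := IH y Hp.
move: Hxy; rewrite /=.
case: (P x); case: (P y) => //= _; case: (P (last y s)) => //=; lia.
Qed.

Lemma alt_double (T : Type) (P : pred T) s : sorted (fun a b => P a != P b) (s ++ s) ->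
  count P s = count (predC P) s.
Proof.
case: s => //= x s; rewrite cat_path => /andP [Hp /= /andP [Hl _]].
have := alt_path Hp; rewrite (negbTE Hl) //.
Qed.

Lemma leaf_inner l x r : is_inner (Node l x r) ->
  leaf_keys (Node l x r) = leaf_keys l ++ leaf_keys r.
Proof. by case: l => [|? ? ?]; case: r => [|? ? ?]. Qed.

Lemma leaf_sub t : {subset leaf_keys t <= keys t}.
Proof.
elim: t => // l IHl x r IHr z.
case Hi: (is_inner (Node l x r)).
  rewrite leaf_inner // mem_cat => /orP [/IHl|/IHr] H; by rewrite /= mem_cat in_cons H ?orbT.
by case: l r Hi {IHl IHr} => [|? ? ?] [|? ? ?] //= _; rewrite !in_cons.
Qed.

Lemma keys_subtrees t w : w \in subtrees t -> {subset keys w <= keys t}.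
Proof.
elim: t => //= l IHl x r IHr; rewrite in_cons mem_cat => /or3P [/eqP ->//|H|H] z Hz;
  rewrite mem_cat in_cons.
  by rewrite (IHl H z Hz).
by rewrite (IHr H z Hz) !orbT.
Qed.

Lemma sum_split (F : nat -> nat) (P : pred nat) Y :
  \sum_(z <- Y) F z = (\sum_(z <- [seq z <- Y | P z]) F z + \sum_(z <- [seq z <- Y | ~~ P z]) F z)%N.
Proof.
elim: Y => [|y Y IH] /=; first by rewrite !big_nil.
by case: (P y) => /=; rewrite !big_cons IH; lia.
Qed.

Fixpoint Bw (t : bst) : R :=
  match t with
  | Nil => R0
  | Node l _ r => if is_inner t then Rplus (Rplus R1 (Rdiv (Bw l) (IZR 2))) (Rdiv (Bw r) (IZR 2)) else R0
  end.

Lemma Bw_inner l x r : is_inner (Node l x r) ->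
  Bw (Node l x r) = Rplus (Rplus R1 (Rdiv (Bw l) (IZR 2))) (Rdiv (Bw r) (IZR 2)).
Proof. by case: l => [|? ? ?]; case: r => [|? ? ?]. Qed.

Definition bal (w : bst) (Y : seq nat) : Prop :=
  if w is Node l _ _ then
    count (fun z => z \in keys l) [seq z <- Y | z \in keys w] =
    count (predC (fun z => z \in keys l)) [seq z <- Y | z \in keys w]
  else True.

Lemma cnt t Y : sorted ltn (keys t) -> all (fun z => z \in leaf_keys t) Y ->
  (forall w, w \in subtrees t -> is_inner w -> bal w Y) ->
  INR (\sum_(w <- subtrees t | is_inner w) size [seq z <- Y | z \in keys w]) = Rmult (INR (size Y)) (Bw t)
  /\ INR (\sum_(z <- Y) size (path_keys t z)) = Rmult (INR (size Y)) (Rplus (Bw t) R1).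
Proof.
elim: t Y => [|l IHl x r IHr] Y Hs HY Hb.
  case: Y HY {Hb} => //= _; rewrite !big_nil /=; split; lra.
have [Hsl Hsr Hal Har] := sorted_node Hs.
case Hi: (is_inner (Node l x r)); last first.
  case: l r Hi HY {IHl IHr Hsl Hsr Hal Har Hb Hs} => [|? ? ?] [|? ? ?] //= _ HY.
  rewrite big_cons /= big_nil.
  have -> : \sum_(z <- Y) size (path_keys (Node Nil x Nil) z) = size Y.
    rewrite -sum1_size big_seq [RHS]big_seq; apply: eq_bigr => z Hz.
    by move/allP: HY => /(_ z Hz); rewrite in_cons orbF => /eqP ->; rewrite /= eqxx.
  simpl; split; lra.
rewrite leaf_inner // in HY.
set Yl := [seq z <- Y | z \in keys l]; set Yr := [seq z <- Y | z \in keys r].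
have Hx : forall z, z \in Y -> ((z \in keys l) = (z < x)) /\ ((z \in keys r) = ~~ (z < x))
                              /\ z != x /\ ((z \in keys l) -> z \in leaf_keys l)
                              /\ ((z \in keys r) -> z \in leaf_keys r).
  move=> z Hz; move/allP: HY => /(_ z Hz); rewrite mem_cat => /orP [H|H].
    have H' := leaf_sub H; have := Hal z H'.
    case Hr: (z \in keys r); first by have := Har z Hr; lia.
    rewrite H' => Hzx; do ! split => //; lia.
  have H' := leaf_sub H; have := Har z H'.
  case Hl: (z \in keys l); first by have := Hal z Hl; lia.
  rewrite H' => Hzx; do ! split => //; lia.
have HYall : [seq z <- Y | z \in keys (Node l x r)] = Y.
  apply/all_filterP/allP => z Hz; rewrite /= mem_cat in_cons.
  have [H1 [H2 _]] := Hx z Hz; rewrite H1 H2.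
  by case: (z < x); rewrite ?orbT.
have Hbt := Hb _ (mem_head _ _) Hi; rewrite /bal HYall in Hbt.
have Esl : size Yl = count (fun z => z \in keys l) Y by rewrite size_filter.
have Esr : size Yr = count (fun z => z \in keys l) Y.
  rewrite size_filter Hbt; apply: eq_in_count => z Hz /=.
  by have [H1 [H2 _]] := Hx z Hz; rewrite H1 H2.
have Es : size Y = (count (fun z => z \in keys l) Y + count (fun z => z \in keys l) Y)%N.
  by rewrite -{1}(count_predC (fun z => z \in keys l)) Hbt.
have HYl : all (fun z => z \in leaf_keys l) Yl.
  apply/allP => z; rewrite mem_filter => /andP [Hl Hz]; have [_ [_ [_ [H _]]]] := Hx z Hz.
  exact: H.
have HYr : all (fun z => z \in leaf_keys r) Yr.
  apply/allP => z; rewrite mem_filter => /andP [Hr Hz]; have [_ [_ [_ [_ H]]]] := Hx z Hz.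
  exact: H.
have Hfl : forall w, w \in subtrees l -> [seq z <- Yl | z \in keys w] = [seq z <- Y | z \in keys w].
  move=> w Hw; rewrite -filter_predI; apply: eq_filter => z /=.
  by case E: (z \in keys w); rewrite // (keys_subtrees Hw E).
have Hfr : forall w, w \in subtrees r -> [seq z <- Yr | z \in keys w] = [seq z <- Y | z \in keys w].
  move=> w Hw; rewrite -filter_predI; apply: eq_filter => z /=.
  by case E: (z \in keys w); rewrite // (keys_subtrees Hw E).
have Hbl : forall w, w \in subtrees l -> is_inner w -> bal w Yl.
  move=> w Hw Hiw.
  have H : w \in subtrees (Node l x r) by rewrite /= in_cons mem_cat Hw orbT.
  move: (Hb w H Hiw); rewrite /bal; case: w Hw H Hiw => // a b c Hw _ _.
  by rewrite (Hfl _ Hw).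
have Hbr : forall w, w \in subtrees r -> is_inner w -> bal w Yr.
  move=> w Hw Hiw.
  have H : w \in subtrees (Node l x r) by rewrite /= in_cons mem_cat Hw !orbT.
  move: (Hb w H Hiw); rewrite /bal; case: w Hw H Hiw => // a b c Hw _ _.
  by rewrite (Hfr _ Hw).
have [IH1l IH2l] := IHl Yl Hsl HYl Hbl.
have [IH1r IH2r] := IHr Yr Hsr HYr Hbr.
have E1 : \sum_(w <- subtrees l | is_inner w) size [seq z <- Yl | z \in keys w] =
          \sum_(w <- subtrees l | is_inner w) size [seq z <- Y | z \in keys w].
  rewrite big_seq_cond [RHS]big_seq_cond; apply: eq_bigr => w /andP [Hw _]; by rewrite Hfl.
have E2 : \sum_(w <- subtrees r | is_inner w) size [seq z <- Yr | z \in keys w] =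
          \sum_(w <- subtrees r | is_inner w) size [seq z <- Y | z \in keys w].
  rewrite big_seq_cond [RHS]big_seq_cond; apply: eq_bigr => w /andP [Hw _]; by rewrite Hfr.
rewrite (Bw_inner Hi).
split.
  rewrite [subtrees _]/= big_cons Hi HYall big_cat -E1 -E2.
  rewrite !plus_INR IH1l IH1r Esl Esr Es plus_INR.
  set h := INR (count _ Y); field.
rewrite (sum_split _ (fun z => z \in keys l)).
rewrite (eq_big_seq (fun z => (1 + size (path_keys l z))%N)); last first.
  move=> z; rewrite mem_filter => /andP [Hl Hz]; have [H1 [_ [H3 _]]] := Hx z Hz.
  by rewrite /= (negbTE H3) -H1 Hl.
rewrite [X in (_ + X)%N](eq_big_seq (fun z => (1 + size (path_keys r z))%N)); last first.
  move=> z; rewrite mem_filter => /andP [Hl Hz]; have [H1 [_ [H3 _]]] := Hx z Hz.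
  by rewrite /= (negbTE H3) -H1 (negbTE Hl).
rewrite !big_split /= !sum1_size.
have -> : [seq z <- Y | ~~ (z \in keys l)] = Yr.
  apply: eq_in_filter => z Hz; have [H1 [H2 _]] := Hx z Hz; by rewrite H2 H1.
rewrite !plus_INR IH2l IH2r -/Yl Esl Esr Es plus_INR.
set h := INR (count _ Y); field.
Qed.


Lemma altc_filter lb y ub s X : altc lb y ub s X = altc lb y ub s [seq x <- X | inJ lb ub x].
Proof. by elim: X s => //= x X IH s; case: ifP => H /=; rewrite ?H IH. Qed.

Lemma altc_path lb y ub x0 Z : path (fun a b => (a < y) != (b < y)) x0 Z ->
  all (inJ lb ub) Z -> altc lb y ub (Some (x0 < y)) Z = size Z.
Proof.
elim: Z x0 => //= z Z IH x0 /andP [H1 H2] /andP [H3 H4].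
by rewrite H3 H1 (IH z H2 H4).
Qed.

Lemma altc_bound lb y ub Z : all (inJ lb ub) Z ->
  sorted (fun a b => (a < y) != (b < y)) Z ->
  count (fun a => a < y) Z = count (predC (fun a => a < y)) Z ->
  size Z <= 2 * altc lb y ub None Z.
Proof.
case: Z => //= z Z /andP [Hz HZ] Hp Hc.
rewrite Hz add0n (altc_path Hp HZ).
case: Z {Hp HZ} Hc => //=; first by case: (z < y).
move=> *; lia.
Qed.

Lemma w_bound S X R c w : fullb S -> w \in subtrees (number S 0) -> is_inner w ->
  node_strongly_stable w X -> node_strongly_stable w (X ++ X) ->
  serve (number S 0) X R = Some c ->
  size [seq z <- X | z \in keys w] <= 4 * evsr (rho w) (number S 0) X R.
Proof.
move=> Hf Hw Hi Hs1 Hs2 Hserve.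
have Hfw : fullb w by apply: (fullb_sub _ Hw); rewrite fullb_number.
have Hsub := keys_subtrees Hw.
have [s' [o' E]] := subtrees_number Hw; subst w.
rewrite fullb_number in Hfw; rewrite is_inner_number in Hi.
case: s' Hi Hfw Hs1 Hs2 Hw Hsub => [|sl a sr] // Hi Hfw Hs1 Hs2 Hw Hsub.
have [Hl Hr] := inner_full Hfw Hi.
set T := number S 0 in Hserve Hw Hsub *.
set y := o' + bst_size sl + 1.
have Enum : number (Node sl a sr) o' = Node (number sl o') y (number sr y) by [].
rewrite Enum in Hs1 Hs2 Hsub *.
have Hrho : rho (Node (number sl o') y (number sr y)) = (o'.+1, y, o' + bst_size (Node sl a sr)).
  rewrite /= !size_number /y; congr (_, _, _); lia.
set W := Node (number sl o') y (number sr y) in Hs1 Hs2 Hsub Hrho *.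
set Xw := [seq z <- X | z \in keys W].
have HkeyW : forall z, (z \in keys W) = inJ o'.+1 (o' + bst_size (Node sl a sr)) z.
  move=> z; rewrite /W -Enum keys_number mem_iota /inJ; lia.
have HkeyL : forall z, z \in keys W -> (z \in keys (number sl o')) = (z < y).
  move=> z; rewrite HkeyW keys_number mem_iota /inJ /y /=; lia.
have HXw : Xw = [seq z <- X | inJ o'.+1 (o' + bst_size (Node sl a sr)) z].
  by apply: eq_filter => z; rewrite HkeyW.
have HallW : all (fun z => z \in keys W) Xw by apply: filter_all.
have Hsort : sorted (fun a b => (a < y) != (b < y)) Xw.
  move: Hs1; rewrite /node_strongly_stable /W -/W -/Xw.
  case: (Xw) HallW => //= x0 s0 Hall.
  move=> Hp; rewrite -(eq_in_path (e := fun u v => (u \in keys (number sl o')) != (v \in keys (number sl o')))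
     (P := fun z => z \in keys W)) //.
  by move=> u v Hu Hv /=; rewrite !HkeyL.
have Hcnt : count (fun a => a < y) Xw = count (predC (fun a => a < y)) Xw.
  move: Hs2; rewrite /node_strongly_stable /W -/W filter_cat -/Xw => /alt_double H.
  have E1 : count (fun z => z \in keys (number sl o')) Xw = count (fun a => a < y) Xw.
    by apply: eq_in_count => z /(allP HallW) /HkeyL.
  have E2 : count (predC (fun z => z \in keys (number sl o'))) Xw = count (predC (fun a => a < y)) Xw.
    by apply: eq_in_count => z /(allP HallW) /HkeyL /= ->.
  by rewrite -E1 -E2.
have Halt : size Xw <= 2 * altc o'.+1 y (o' + bst_size (Node sl a sr)) None X.
  rewrite altc_filter -HXw; apply: altc_bound => //.
  by apply/allP => z /(allP HallW); rewrite HkeyW.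
have HK : sorted ltn (keys T) by rewrite /T keys_number; exact: iota_ltn_sorted.
set ub := o' + bst_size (Node sl a sr).
have Ha : o'.+1 \in keys T by apply: Hsub; rewrite HkeyW /inJ /ub /=; lia.
have Hb : y \in keys T by apply: Hsub; rewrite HkeyW /inJ /ub /y /=; lia.
have Hv : o'.+1 < y <= ub by rewrite /ub /y /=; lia.
have Ha' : o'.+1 <= o'.+1 < y by rewrite /y; lia.
have Hb' : y <= y <= ub by rewrite /ub /y /=; lia.
have Hle := alt_le HK Hv Ha Ha' Hb Hb' Hserve erefl (s := None) (f := true).
have [z Hz] := tp_some (t := T) erefl HK Ha Ha' Hb Hb'.
have := Hle ltac:(move=> _; by exists z).
rewrite /evsr Hrho => H; apply: (leq_trans Halt).
rewrite -[4]/(2*2) -mulnA leq_mul2l /=.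
by move: H; rewrite [~~ true]/= addn0.
Qed.


Section Reals.
Local Open Scope R_scope.

Lemma ln2_pos : 0 < ln (IZR 2).
Proof. have := ln_lt_2; lra. Qed.

Lemma lg_le a b : 0 < a -> a <= b -> lg a <= lg b.
Proof.
move=> Ha Hab; rewrite /lg.
have H2 : 0 < ln (IZR 2) by exact: ln2_pos.
apply: Rmult_le_compat_r; first by left; apply: Rinv_0_lt_compat.
case: (Rle_lt_or_eq_dec _ _ Hab) => H; last by rewrite H; lra.
left; exact: ln_increasing.
Qed.

Lemma lg_mult a b : 0 < a -> 0 < b -> lg (a * b) = lg a + lg b.
Proof. by move=> Ha Hb; rewrite /lg ln_mult //; field; apply: Rgt_not_eq; exact: ln2_pos. Qed.

Lemma lg_pow a n : 0 < a -> lg (a ^ n) = INR n * lg a.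
Proof. by move=> Ha; rewrite /lg ln_pow //; field; apply: Rgt_not_eq; exact: ln2_pos. Qed.

Lemma lg_2 : lg 2 = 1.
Proof. rewrite /lg; field; apply: Rgt_not_eq; exact: ln2_pos. Qed.

Lemma lg_3 : lg 3 <= 2.
Proof.
have -> : 2 = lg 4.
  have -> : 4 = 2 ^ 2 by ring.
  rewrite lg_pow ?lg_2 /=; lra.
apply: lg_le; lra.
Qed.

Lemma lg_ge1 x : 2 <= x -> 1 <= lg x.
Proof. move=> H; rewrite -lg_2; apply: lg_le; lra. Qed.

Lemma lg_pos x : 1 <= x -> 0 <= lg x.
Proof.
move=> H; have -> : 0 = lg 1 by rewrite /lg ln_1; field; apply: Rgt_not_eq; exact: ln2_pos.
apply: lg_le; lra.
Qed.

Lemma lg_2pow k : lg (2 ^ k) = INR k.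
Proof. by rewrite lg_pow ?lg_2; lra. Qed.

Lemma pow_half (n : nat) : (1 <= n)%N -> (1 - / INR n) ^ n <= / 2.
Proof.
move=> Hn.
have HN : 1 <= INR n by apply: (le_INR 1); apply/leP.
have Hp : 0 < / INR n by apply: Rinv_0_lt_compat; lra.
have Hp1 : / INR n <= 1 by rewrite -Rinv_1; apply: Rinv_le_contravar; lra.
have Hb := poly n (/ INR n) Hp.
have E : INR n * / INR n = 1 by field; lra.
have Hprod : (1 - / INR n) ^ n * (1 + / INR n) ^ n <= 1.
  rewrite -Rpow_mult_distr.
  have -> : (1 - / INR n) * (1 + / INR n) = 1 - / INR n * / INR n by ring.
  have Q1 : / INR n * / INR n <= 1 * 1 by apply: Rmult_le_compat; lra.
  have Q2 : 0 <= / INR n * / INR n by apply: Rmult_le_pos; lra.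
  apply: (Rle_trans _ (1 ^ n)); last by rewrite pow1; lra.
  apply: pow_incr; split; lra.
have Ha : 0 <= (1 - / INR n) ^ n by apply: pow_le; lra.
rewrite E in Hb.
have : (1 - / INR n) ^ n * 2 <= 1 by nra.
lra.
Qed.

Lemma Bw_number s o : Bw (number s o) = Bw s.
Proof.
elim: s o => //= l IHl x r IHr o.
rewrite IHl IHr.
by case: l {IHl} => [|? ? ?]; case: r {IHr} => [|? ? ?].
Qed.

Lemma Bw_chain j S : Bw (Defs.chain j S) = (2 + Bw S) * (1 - (/ 2) ^ j).
Proof.
elim: j => [|j IH]; first by rewrite /=; lra.
rewrite [Defs.chain j.+1 S]/= Bw_inner; last by case: j {IH}.
rewrite IH /=; field.
Qed.

Lemma Bw_kr k r : (1 <= k)%N ->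
  Bw (kr_shape k r) = 2 * (1 - / 2 ^ k) / (/ 2 ^ k) * (1 - (1 - / 2 ^ k) ^ r).
Proof.
move=> Hk.
have Hp : 0 < / 2 ^ k by apply: Rinv_0_lt_compat; apply: pow_lt; lra.
elim: r => [|r IH]; first by rewrite /=; ring.
rewrite [kr_shape k r.+1]/= Bw_inner; last by case: (kr_shape k r) => [|? ? ?] //; case: (k.-1).
rewrite Bw_chain IH.
have E : (/ 2) ^ k.-1 = 2 * / 2 ^ k.
  rewrite pow_inv; case: k Hk {Hp IH} => // k _ /=; field; apply: pow_nonzero; lra.
rewrite E -tech_pow_Rmult.
set q := / 2 ^ k; set a := (1 - q) ^ r.
field; apply: Rgt_not_eq; exact: Hp.
Qed.

Lemma expn_INR m n : INR (m ^ n) = INR m ^ n.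
Proof. elim: n => [|n IH]; first by rewrite expn0. by rewrite expnS mult_INR IH. Qed.

Lemma Bw_T k : (1 <= k)%N ->
  INR (2 ^ k) - 1 <= Bw (kr_tree k (2 ^ k)) <= 2 * (INR (2 ^ k) - 1).
Proof.
have E2 : INR 2 = 2 by rewrite /=; ring.
move=> Hk; rewrite /kr_tree Bw_number Bw_kr // expn_INR E2.
have H1 : 1 <= 2 ^ k by apply: pow_R1_Rle; lra.
have Hh := pow_half (n := (2 ^ k)%N) ltac:(by rewrite expn_gt0).
rewrite expn_INR E2 in Hh.
set N := 2 ^ k in H1 Hh *.
set a := (1 - / N) ^ (2 ^ k)%N in Hh *.
have HN : / N <= 1 by rewrite -Rinv_1; apply: Rinv_le_contravar; lra.
have Ha : 0 <= a by apply: pow_le; lra.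
have -> : 2 * (1 - / N) / / N = 2 * (N - 1).
  field; apply: Rgt_not_eq; lra.
split; nra.
Qed.

End Reals.

Lemma size_chain j S : bst_size (Defs.chain j S) = (j * (bst_size S + 1) + 1)%N.
Proof. elim: j => //= j ->; lia. Qed.

Lemma size_kr k r : (1 <= k)%N -> bst_size (kr_shape k r.+1) = (k * (bst_size (kr_shape k r) + 1) + 1)%N.
Proof. move=> Hk /=; rewrite size_chain; case: k Hk => // k _ /=; lia. Qed.

Lemma size_kr_bounds k r : (2 <= k)%N ->
  (k ^ r <= bst_size (kr_shape k r))%N /\ (bst_size (kr_shape k r) + 1 <= 2 * (2 * k) ^ r)%N.
Proof.
move=> Hk; elim: r => [|r [IH1 IH2]]; first by [].
rewrite size_kr; last lia.
rewrite !expnS; split; nia.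
Qed.


Section Reals2.
Local Open Scope R_scope.

Lemma lg_bounds k s : (2 <= k)%N ->
  (k ^ (2 ^ k) <= s)%N -> (s + 1 <= 2 * (2 * k) ^ (2 ^ k))%N ->
  let N := INR (2 ^ k) in let l := lg (INR k) in
  [/\ N * l <= lg (INR s), lg (INR s) <= 4 * N * l, 1 <= l,
      l <= lg (lg (lg (INR s))) & lg (lg (lg (INR s))) <= 3 * l].
Proof.
move=> Hk Hs1 Hs2 N l.
have E2 : INR 2 = 2 by rewrite /=; ring.
have Hkk : 2 <= INR k by rewrite -E2; apply: le_INR; apply/leP.
have HN : N = 2 ^ k by rewrite /N expn_INR E2.
have HN1 : 1 <= N by rewrite HN; apply: pow_R1_Rle; lra.
have Hl1 : 1 <= l by apply: lg_ge1.
have Hlk : l <= INR k.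
  rewrite /l; apply: (Rle_trans _ (lg (2 ^ k))); last by rewrite lg_2pow; lra.
  apply: lg_le; first lra.
  rewrite -E2 -expn_INR; apply: le_INR; apply/leP; exact: ltnW (ltn_expl _ (isT : 1 < 2)%N).
have Hpos1 : 0 < INR k ^ (2 ^ k) by apply: pow_lt; lra.
have HsL : INR k ^ (2 ^ k) <= INR s by rewrite -expn_INR; apply: le_INR; apply/leP.
have HsU : INR s <= 2 * (2 * INR k) ^ (2 ^ k).
  have : INR (s + 1) <= INR (2 * (2 * k) ^ (2 ^ k)) by apply: le_INR; apply/leP.
  rewrite plus_INR mult_INR expn_INR mult_INR E2 /=; lra.
have HL1 : N * l <= lg (INR s).
  apply: (Rle_trans _ (lg (INR k ^ (2 ^ k)))); last by apply: lg_le.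
  rewrite lg_pow; [exact: Rle_refl | lra].
have HL2 : lg (INR s) <= 4 * N * l.
  apply: (Rle_trans _ (lg (2 * (2 * INR k) ^ (2 ^ k)))); first by apply: lg_le; lra.
  rewrite lg_mult; [|lra|apply: pow_lt; lra].
  rewrite lg_pow; last lra.
  rewrite lg_mult; [|lra|lra].
  rewrite lg_2 -/N -/l; nra.
have HLpos : 0 < lg (INR s) by nra.
have HM1 : INR k <= lg (lg (INR s)).
  apply: (Rle_trans _ (lg (2 ^ k))); first by rewrite lg_2pow; lra.
  apply: lg_le; first by apply: pow_lt; lra.
  rewrite -HN; nra.
have HM2 : lg (lg (INR s)) <= 3 * INR k.
  apply: (Rle_trans _ (lg (4 * N * l))); first by apply: lg_le.
  rewrite (@lg_mult (4 * N) l); [|lra|lra].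
  rewrite (@lg_mult 4 N); [|lra|lra].
  have L4 : lg 4 = 2.
    have -> : 4 = 2 ^ 2 by ring.
    rewrite lg_pow ?lg_2 /=; lra.
  rewrite L4.
  rewrite HN lg_2pow.
  have : lg l <= l by apply: lg_le; lra.
  lra.
split => //.
  rewrite /l; apply: lg_le; lra.
apply: (Rle_trans _ (lg (3 * INR k))); first by apply: lg_le; lra.
rewrite lg_mult; [|lra|lra].
have := lg_3; rewrite -/l; lra.
Qed.

End Reals2.


Section Reals3.
Local Open Scope R_scope.

Lemma final_arith m L D l N Cc B : 0 <= m -> 1 <= l -> l <= D -> D <= 3 * l ->
  N * l <= L -> L <= 4 * N * l -> 2 <= N -> N - 1 <= B -> B <= 2 * (N - 1) ->
  m * B <= 4 * Cc -> Cc <= m * (B + 1) ->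
  1 / 32 * (m * L / D) <= Cc /\ Cc <= 6 * (m * L / D).
Proof.
move=> Hm Hl HD1 HD2 HL1 HL2 HN HB1 HB2 HC1 HC2.
have HD : 0 < D by lra.
set f := m * L / D.
have Hf : f * D = m * L by rewrite /f; field; lra.
have H1 : m * L <= m * (4 * N * l) by apply: Rmult_le_compat_l.
have H2 : m * (4 * N * l) <= (4 * m * N) * D.
  have -> : m * (4 * N * l) = (4 * m * N) * l by ring.
  apply: Rmult_le_compat_l => //; nra.
have Hfu : f <= 4 * m * N.
  apply: (Rmult_le_reg_r D) => //; lra.
have H3 : m * (N * l) <= m * L by apply: Rmult_le_compat_l.
have H4 : (m * N / 3) * D <= m * (N * l).
  have -> : m * (N * l) = (m * N / 3) * (3 * l) by field.
  apply: Rmult_le_compat_l => //; nra.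
have Hfl : m * N / 3 <= f.
  apply: (Rmult_le_reg_r D) => //; lra.
have H5 : m * (N - 1) <= m * B by apply: Rmult_le_compat_l.
have H6 : m * B <= m * (2 * (N - 1)) by apply: Rmult_le_compat_l.
have H7 : 0 <= m * N by nra.
split; nra.
Qed.

End Reals3.

Lemma ex_min (P : nat -> Prop) n : P n -> exists m, P m /\ forall j, P j -> (m <= j)%N.
Proof.
elim: n {-2}n (leqnn n) => [|n IH] m Hm HP.
  exists m; split => // j _; lia.
case: (classic (exists j, P j /\ (j < m)%N)) => [[j [Hj Hjm]]|Hno].
  apply: (IH j) => //; lia.
exists m; split => // j Hj; case: (leqP m j) => // Hjm.
by exfalso; apply: Hno; exists j.
Qed.

Lemma serve_static t X : serve t X (nseq (size X) [::]) = Some (\sum_(x <- X) step_cost t x [::]).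
Proof. by elim: X => [|x X IH] /=; [rewrite big_nil | rewrite IH big_cons]. Qed.

Lemma step_cost_nil t x : sorted ltn (keys t) -> (step_cost t x [::] <= size (path_keys t x))%N.
Proof.
move=> Hs; rewrite /step_cost.
have Hu : uniq (keys t) by apply: (sorted_uniq ltn_trans ltnn).
apply: uniq_leq_size; first exact: filter_uniq.
move=> y; rewrite mem_filter => /andP [/orP [//|] Hsp _].
by move: Hsp; rewrite /in_span; case: (subtree_at y t).
Qed.

Lemma fullb_node l x r : fullb l -> fullb r -> fullb (Node l x r).
Proof. by case: l => [|? ? ?]; case: r => [|? ? ?] //= ->. Qed.

Lemma fullb_kr k r : fullb (kr_shape k r).
Proof.
have Hc : forall j S, fullb S -> fullb (Defs.chain j S).
  by move=> j S HS; elim: j => //= j IH; apply: fullb_node.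
by elim: r => //= r IH; apply: fullb_node => //; apply: Hc.
Qed.

Theorem lemma10 :
  exists (c1 c2 : R) (K : nat), Rlt 0 c1 /\ Rlt 0 c2 /\
  forall k : nat, (2 <= k)%N -> (K <= k)%N ->
  let T := kr_tree k (2 ^ k) in
  let n := INR (bst_size T) in
  forall X : seq nat, atomic T X ->
  let f := Rdiv (Rmult (INR (size X)) (lg n)) (lg (lg (lg n))) in
  exists c : nat, opt_cost T X c /\ Rle (Rmult c1 f) (INR c) /\ Rle (INR c) (Rmult c2 f).
Proof.
exists (Rdiv (IZR 1) (IZR 32)), (IZR 6), 2.
split; first by lra.
split; first by rewrite /=; lra.
move=> k Hk _ T n X [Hne [Hrep _]] f.
set S := kr_shape k (2 ^ k).
have HT : T = number S 0 by [].
have Hfull : fullb S by apply: fullb_kr.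
have Hs : sorted ltn (keys T) by rewrite HT keys_number; exact: iota_ltn_sorted.
have Hst1 : strongly_stable T X by have := Hrep 1 isT; rewrite /= cats0.
have Hst2 : strongly_stable T (X ++ X) by have := Hrep 2 isT; rewrite /= cats0.
move/andP: Hst1 => [Hall Hnodes1].
move/andP: Hst2 => [_ Hnodes2].
have Hn1 : forall w, w \in subtrees T -> is_inner w -> node_strongly_stable w X.
  by move=> w Hw Hi; have := allP Hnodes1 w Hw; rewrite Hi.
have Hn2 : forall w, w \in subtrees T -> is_inner w -> node_strongly_stable w (X ++ X).
  by move=> w Hw Hi; have := allP Hnodes2 w Hw; rewrite Hi.
have Hbal : forall w, w \in subtrees T -> is_inner w -> bal w X.
  move=> w Hw Hi; have := Hn2 w Hw Hi.
  case: w {Hw Hi} => // l y r; rewrite /node_strongly_stable filter_cat.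
  exact: alt_double.
have [C1 C2] := cnt Hs Hall Hbal.
have [c [[R Hc] Hmin]] := ex_min (P := fun c => exists R, serve T X R = Some c)
   (ex_intro _ _ (serve_static T X)).
exists c; split; first by split => //; [exists R | move=> R' c' H; apply: Hmin; exists R'].
have Hup : (c <= \sum_(z <- X) size (path_keys T z))%N.
  apply: (leq_trans (Hmin _ (ex_intro _ _ (serve_static T X)))).
  by apply: leq_sum => z _; apply: step_cost_nil.
have Hlow : (\sum_(w <- subtrees T | is_inner w) size [seq z <- X | z \in keys w] <= 4 * c)%N.
  apply: (@leq_trans (\sum_(w <- subtrees T | is_inner w) 4 * evsr (rho w) T X R)).
    rewrite big_seq_cond [X in (_ <= X)%N]big_seq_cond; apply: leq_sum => w /andP [Hw Hi].
    rewrite HT in Hw Hc *.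
    apply: (w_bound Hfull Hw Hi _ _ Hc).
      by have := Hn1 w ltac:(by rewrite HT) Hi.
    by have := Hn2 w ltac:(by rewrite HT) Hi.
  rewrite -big_distrr /= leq_mul2l /=.
  have := sum_evs (refs_compat S) (refs_valid Hfull) Hc.
  by rewrite /refs big_map big_filter HT.
have HBw := Bw_T (k := k) ltac:(lia).
have [Hsz1 Hsz2] := size_kr_bounds (2 ^ k) Hk.
have [L1 L2 L3 L4 L5] := lg_bounds Hk Hsz1 Hsz2.
have Hn : n = INR (bst_size S) by rewrite /n HT size_number.
have HN : Rle (IZR 2) (INR (2 ^ k)).
  have -> : IZR 2 = INR 2 by rewrite /=; ring.
  apply: le_INR; apply/leP; rewrite (_ : 2 = 2 ^ 1)%N //; rewrite leq_exp2l //; lia.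
have HC1 : Rle (Rmult (INR (size X)) (Bw T)) (Rmult (IZR 4) (INR c)).
  rewrite -C1 -(INR_IZR_INZ 4) -mult_INR; apply: le_INR; apply/leP; exact: Hlow.
have HC2 : Rle (INR c) (Rmult (INR (size X)) (Rplus (Bw T) R1)).
  rewrite -C2; apply: le_INR; apply/leP; exact: Hup.
have Hm : Rle R0 (INR (size X)) by apply: pos_INR.
rewrite /f Hn -/S.
have [F1 F2] := final_arith Hm L3 L4 L5 L1 L2 HN (proj1 HBw) (proj2 HBw) HC1 HC2.
split; [exact: F1|].
by move: F2; rewrite /=.
Qed.
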